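(* Let $n\ge2$. Every finite rooted poset $F$ of height $n$ which validates $\mathbf{PL}$ is the image of a sawed tree of height $n$ under a surjective p-morphism.
   Context: A p-morphism $f\colon G\to F$ is a map with $f(\uparrow x)=\uparrow f(x)$ for all $x$. A finite tree is a finite rooted poset in which each $\downarrow x$ is a chain; $\mathrm{Top}(T)$ is its set of maximal elements. Let $T$ be a finite tree of height $>0$ all of whose top elements have the same height, with a plane ordering $\prec$ of $\mathrm{Top}(T)$ (a linear order such that each $\uparrow x\cap\mathrm{Top}(T)$ is a $\prec$-interval); enumerate $\mathrm{Top}(T)=\{t_1\prec\cdots\prec t_k\}$. The sawed tree based on $(T,\prec)$ is $T$ together with new elements $s_1,\dots,s_{k-1}$ with $t_i<s_i$ and $t_{i+1}<s_i$ (closed under transitivity). The height of a poset is the maximum of $|C|-1$ over chains $C$. For a finite rooted poset $Q$, $\chi(Q)$ is its Jankov–Fine formula: a frame validates $\chi(Q)$ iff it has no surjective p-morphism from an upset of it onto $Q$. The 3-fork is $\{r,a,b,c\}$ with $r<a,r<b,r<c$ only; the Scott frame is $\{r,u_1,u_2,v\}$ with $r<u_1<u_2$, $r<v$ (and $r<u_2$) only. $\mathbf{PL}$ is the smallest intermediate logic containing $\chi(\text{3-fork})$ and $\chi(\text{Scott frame})$. *)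

(* Defs.v *)
From mathcomp Require Import all_boot.
Set Implicit Arguments. Unset Strict Implicit. Unset Printing Implicit Defensive.

Section Posets.
Variable T : finType.
Variable le : rel T.

Definition is_porder : Prop :=
  reflexive le /\ antisymmetric le /\ transitive le.

Definition is_root (r : T) : Prop := forall x, le r x.

Definition finite_rooted_poset (r : T) : Prop := is_porder /\ is_root r.

Definition is_chain (C : {set T}) : Prop :=
  {in C &, forall x y, le x y || le y x}.

Definition has_height (n : nat) : Prop :=
  (exists C : {set T}, is_chain C /\ #|C| = n.+1) /\
  (forall C : {set T}, is_chain C -> #|C| <= n.+1).

Definition up (x : T) : {set T} := [set y | le x y].
Definition down (x : T) : {set T} := [set y | le y x].

Definition is_upset (U : {set T}) : Prop :=
  forall x y, x \in U -> le x y -> y \in U.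

Definition is_top (x : T) : bool := [forall y, le x y ==> (y == x)].

Definition is_tree (r : T) : Prop :=
  finite_rooted_poset r /\ forall x, is_chain (down x).

Definition elt_height (x : T) : nat := #|down x|.-1.

End Posets.

(* p-morphism f : G -> F (restricted to the upset U of G): f(up x) = up (f x),
   where up x is computed in U (for an upset U this is U :&: up x). *)
Definition pmorphism_on (G F : finType) (leG : rel G) (leF : rel F)
    (U : {set G}) (f : G -> F) : Prop :=
  forall x, x \in U -> f @: (U :&: up leG x) = up leF (f x).

Definition pmorphism (G F : finType) (leG : rel G) (leF : rel F) (f : G -> F) :=
  pmorphism_on leG leF [set: G] f.

(* F validates chi(Q), via the characterization of the Jankov-Fine formula:
   no upset of F maps onto Q by a surjective p-morphism. *)
Definition validates_chi (F Q : finType) (leF : rel F) (leQ : rel Q) : Prop :=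
  ~ exists (U : {set F}) (f : F -> Q),
      is_upset leF U /\ pmorphism_on leF leQ U f /\ f @: U = [set: Q].

(* 3-fork: 0 = r, 1,2,3 = a,b,c *)
Definition fork3_le : rel 'I_4 := fun i j => (i == j) || (val i == 0).
(* Scott frame: 0 = r, 1 = u1, 2 = u2, 3 = v *)
Definition scott_le : rel 'I_4 :=
  fun i j => (i == j) || (val i == 0) || ((val i == 1) && (val j == 2)).

(* A frame validates PL = the least intermediate logic containing
   chi(3-fork) and chi(Scott) iff it validates these two formulas. *)
Definition validates_PL (F : finType) (leF : rel F) : Prop :=
  validates_chi leF fork3_le /\ validates_chi leF scott_le.

(* Plane ordering of Top(T), given as the enumeration s = [t_1; ...; t_k]:
   s lists exactly the top elements without repetition, and for every x
   the indices of the tops above x form an interval. *)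
Definition plane_enum (T : finType) (le : rel T) (s : seq T) : Prop :=
  uniq s /\ (forall x, (x \in s) = is_top le x) /\
  forall (x : T) (i j l : nat), i <= j -> j <= l -> l < size s ->
    (forall d, le x (nth d s i)) -> (forall d, le x (nth d s l)) ->
    (forall d, le x (nth d s j)).

(* The sawed tree based on (T, s): carrier T + {s_0, ..., s_(k-2)},
   s_i lying above t_i = nth s i and t_(i+1) = nth s i.+1 (transitively closed). *)
Definition sawed_le (T : finType) (le : rel T) (r : T) (s : seq T)
    : rel (T + 'I_(size s).-1) :=
  fun a b =>
    match a, b with
    | inl x, inl y => le x y
    | inl x, inr i => le x (nth r s i) || le x (nth r s i.+1)
    | inr i, inr j => i == j
    | inr _, inl _ => false
    end.
Arguments sawed_le [T] le r s _ _.

(* Main.v *)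
Require Import Defs.
From mathcomp Require Import all_boot.
From Stdlib Require Import ClassicalEpsilon.
Set Implicit Arguments. Unset Strict Implicit. Unset Printing Implicit Defensive.

Definition o0 : 'I_4 := @Ordinal 4 0 isT.
Definition o1 : 'I_4 := @Ordinal 4 1 isT.
Definition o2 : 'I_4 := @Ordinal 4 2 isT.
Definition o3 : 'I_4 := @Ordinal 4 3 isT.

Lemma ord4_cases (j : 'I_4) : [\/ j = o0, j = o1, j = o2 | j = o3].
Proof.
case: j => [[|[|[|[|k]]]] Hk] //.
- by apply: Or41; apply: val_inj.
- by apply: Or42; apply: val_inj.
- by apply: Or43; apply: val_inj.
- by apply: Or44; apply: val_inj.
Qed.

Lemma pm_intro (F Q : finType) (leQ : rel Q) (A : {set F}) (f : F -> Q) (x : F) :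
  (forall y, y \in A -> leQ (f x) (f y)) ->
  (forall j, leQ (f x) j -> exists2 y, y \in A & f y = j) ->
  f @: A = up leQ (f x).
Proof.
move=> H1 H2; apply/setP => j; rewrite inE; apply/imsetP/idP => [[y Hy ->]|Hj].
  exact: H1.
by have [y Hy Hyj] := H2 j Hj; exists y.
Qed.

Section FSide.
Variables (F : finType) (leF : rel F).
Hypothesis leFrefl : reflexive leF.
Hypothesis leFanti : antisymmetric leF.
Hypothesis leFtrans : transitive leF.

Notation topF := (is_top leF).
Lemma antiF x y : leF x y -> leF y x -> x = y.
Proof. by move=> H1 H2; apply: leFanti; rewrite H1 H2. Qed.
Definition Mt (p : F) : {set F} := [set q | topF q && leF p q].
Definition lowF (p : F) : bool := [forall c, (leF p c && (c != p)) ==> topF c].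
Definition validT (t : F * F * F) : bool :=
  [&& t.1.2 \in Mt t.1.1, t.2 \in Mt t.1.1 &
      lowF t.1.1 ==> (Mt t.1.1 \subset [set t.1.2; t.2])].

Lemma topP x : reflect (forall y, leF x y -> y = x) (topF x).
Proof.
rewrite /is_top; apply: (iffP forallP) => H y.
  by move=> Hxy; apply/eqP; exact: (implyP (H y)).
by apply/implyP => /H ->.
Qed.

Lemma exists_top x : exists q, q \in Mt x.
Proof.
case: (arg_minnP (fun y => #|up leF y|) (leFrefl x)) => y Hxy Hmin.
exists y; rewrite inE Hxy andbT; apply/topP => z Hyz.
apply/eqP; apply: contraT => Hne.
have Hxz : leF x z by apply: leFtrans Hyz.
have := Hmin z Hxz; rewrite leqNgt => /negP H; exfalso; apply: H; apply: proper_card.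
apply/properP; split.
  by apply/subsetP => u; rewrite !inE => Hzu; apply: leFtrans Hzu.
exists y; rewrite !inE ?leFrefl //.
apply/negP => Hzy; move: Hne; by rewrite (antiF Hyz Hzy) eqxx.
Qed.

Lemma M_sub p c : leF p c -> Mt c \subset Mt p.
Proof.
move=> Hpc; apply/subsetP => q; rewrite !inE => /andP[-> Hcq] /=.
exact: leFtrans Hcq.
Qed.

Lemma top_M q : topF q -> Mt q = [set q].
Proof.
move=> Hq; apply/setP => z; rewrite !inE; apply/idP/idP.
  by case/andP => _ /(topP _ Hq) ->.
by move/eqP->; rewrite Hq leFrefl.
Qed.

Lemma top_low q : topF q -> lowF q.
Proof.
move=> Hq; apply/forallP => c; apply/implyP => /andP[Hqc Hne].
by move: Hne; rewrite (topP _ Hq c Hqc) eqxx.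
Qed.

Lemma inM_top p q : q \in Mt p -> topF q.
Proof. by rewrite inE => /andP[]. Qed.

Lemma inM_le p q : q \in Mt p -> leF p q.
Proof. by rewrite inE => /andP[]. Qed.

Lemma low_succ_top p c : lowF p -> leF p c -> c != p -> topF c.
Proof. by move=> /forallP /(_ c) /implyP H Hpc Hne; apply: H; rewrite Hpc Hne. Qed.

Lemma fork_contra c q1 q2 q3 :
  validates_chi leF fork3_le -> lowF c ->
  q1 \in Mt c -> q2 \in Mt c -> q3 \in Mt c ->
  q1 != q2 -> q1 != q3 -> q2 != q3 -> False.
Proof.
move=> Hv Hlow H1 H2 H3 N12 N13 N23.
have Hcq : forall q q', q \in Mt c -> q' \in Mt c -> q != q' -> q != c.
  move=> q q' Hq Hq' Hqq'; apply/eqP => Eqc.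
  have Ht : topF c by rewrite -Eqc; exact: inM_top Hq.
  move: Hqq'; by rewrite Eqc (topP _ Ht q' (inM_le Hq')) eqxx.
have N1 := Hcq _ _ H1 H2 N12.
have N2 := Hcq _ _ H2 H3 N23.
have N3 : q3 != c by apply: (Hcq _ _ H3 H1); rewrite eq_sym.
pose f y := if y == c then o0 else if y == q1 then o1 else if y == q2 then o2 else o3.
pose U := up leF c.
have fc : f c = o0 by rewrite /f eqxx.
have f1 : f q1 = o1 by rewrite /f (negbTE N1) eqxx.
have f2 : f q2 = o2 by rewrite /f (negbTE N2) eq_sym (negbTE N12) eqxx.
have f3 : f q3 = o3 by rewrite /f (negbTE N3) eq_sym (negbTE N13) eq_sym (negbTE N23).
have UU : U :&: up leF c = U by rewrite setIid.
have Hall : f @: U = up fork3_le (f c).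
  apply: pm_intro => [y _|j _]; first by rewrite fc /fork3_le orbT.
  case: (ord4_cases j) => ->.
  - by exists c; rewrite ?inE ?leFrefl.
  - by exists q1; rewrite // inE (inM_le H1).
  - by exists q2; rewrite // inE (inM_le H2).
  - by exists q3; rewrite // inE (inM_le H3).
apply: Hv; exists U, f; split; [|split].
- by move=> x y; rewrite !inE => Hcx Hxy; apply: leFtrans Hxy.
- move=> x; rewrite inE => Hcx.
  case: (eqVneq x c) => [->|Hxc]; first by rewrite UU.
  have Hx : topF x by apply: (low_succ_top Hlow).
  have fx : f x != o0 by rewrite /f (negbTE Hxc); do 2 case: ifP => //.
  apply: pm_intro => [y|j].
    by rewrite !inE => /andP[_ /(topP _ Hx) ->]; rewrite /fork3_le eqxx.
  rewrite /fork3_le => /orP[/eqP<-|Hv0].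
    by exists x => //; rewrite !inE Hcx leFrefl.
  by move: fx; rewrite (_ : f x = o0) //; apply: val_inj; exact/eqP.
- rewrite Hall fc; apply/setP => j; by rewrite !inE /fork3_le orbT.
Qed.

Lemma two_elems (a b x y z : F) : x != y -> x \in [set a; b] -> y \in [set a; b] ->
  z \in [set a; b] -> z \in [set x; y].
Proof.
move=> Hxy; rewrite !inE => /orP[]/eqP ? /orP[]/eqP ? /orP[]/eqP ?; subst;
  rewrite ?eqxx ?orbT //; by rewrite eqxx in Hxy.
Qed.

Lemma fork_two c : validates_chi leF fork3_le -> lowF c ->
  exists a b, [/\ a \in Mt c, b \in Mt c & Mt c \subset [set a; b]].
Proof.
move=> Hv Hlow.
have [a Ha] := exists_top c.
case: (set0Pn (Mt c :\ a)) => [[b]|H0].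
  rewrite in_setD1 => /andP[Hba Hb].
  case: (set0Pn (Mt c :\: [set a; b])) => [[d]|H1].
    rewrite in_setD in_set2 negb_or => /andP[/andP[Hda Hdb] Hd].
    by case: (fork_contra Hv Hlow Ha Hb Hd); rewrite // eq_sym.
  exists a, b; split => //; apply/subsetP => z Hz; apply: contraT => Hn.
  by case: H1; exists z; rewrite in_setD Hn Hz.
exists a, a; split => //; apply/subsetP => z Hz; apply: contraT => Hn.
case: H0; exists z; rewrite in_setD1 Hz andbT.
by move: Hn; rewrite in_set2 orbb.
Qed.

Lemma Mt_nonsubQ p y (P : {set F}) : Mt y \subset P -> ~~ (Mt y \subset Mt p :\: P).
Proof.
move=> HP; apply/negP => HQ; have [q Hq] := exists_top y.
by move: (subsetP HQ q Hq); rewrite inE (subsetP HP q Hq).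
Qed.

Lemma scott_contra p w (P : {set F}) :
  validates_chi leF scott_le ->
  leF p w -> w != p -> ~~ topF w -> Mt w \subset P -> P \subset Mt p ->
  (exists q, q \in Mt p :\: P) ->
  (forall c, leF p c -> c != p -> (Mt c \subset P) || (Mt c \subset Mt p :\: P)) ->
  False.
Proof.
move=> Hv Hpw Hwp Hw HwP HPp [q' Hq'] Hdich.
set Q := Mt p :\: P in Hq' Hdich.
have Hpt : ~~ topF p by apply/negP => /topP /(_ w Hpw) Ew; rewrite Ew eqxx in Hwp.
pose f y := if y == p then o0 else if Mt y \subset Q then o3 else if topF y then o2 else o1.
pose U := up leF p.
have fp : f p = o0 by rewrite /f eqxx.
have Hsucc : forall x y, leF p x -> x != p -> leF x y -> y != p.
  move=> x y Hpx Hxp Hxy; apply/eqP => Eyp; move: Hxp; rewrite -Eyp in Hpx *.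
  by rewrite (antiF Hxy Hpx) eqxx.
have Hall : f @: U = up scott_le (f p).
  apply: pm_intro => [y _|j _]; first by rewrite fp /scott_le orbT.
  have [q Hq] := exists_top w.
  have HqP : q \in P := subsetP HwP q Hq.
  have Hqt := inM_top Hq.
  have Hqp : q != p by apply/eqP => E; rewrite -E Hqt in Hpt.
  case: (ord4_cases j) => ->.
  - by exists p; rewrite ?inE ?leFrefl.
  - exists w; rewrite ?inE // /f (negbTE Hwp) (negbTE (Mt_nonsubQ p HwP)).
    by rewrite (negbTE Hw).
  - exists q; first by rewrite inE (inM_le (subsetP HPp q HqP)).
    rewrite /f (negbTE Hqp) (top_M Hqt) Hqt; case: ifP => //.
    by rewrite sub1set inE HqP.
  - exists q'; first by rewrite inE; move: Hq'; rewrite !inE => /andP[_ /andP[]].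
    have Hq't : topF q' by move: Hq'; rewrite !inE => /andP[_ /andP[]].
    have Hq'p : q' != p by apply/eqP => E; rewrite -E Hq't in Hpt.
    by rewrite /f (negbTE Hq'p) (top_M Hq't) sub1set Hq'.
apply: Hv; exists U, f; split; [|split].
- by move=> x y; rewrite !inE => Hcx Hxy; apply: leFtrans Hxy.
- move=> x; rewrite inE => Hpx.
  case: (eqVneq x p) => [->|Hxp]; first by rewrite setIid.
  have HU : U :&: up leF x = up leF x.
    by apply/setIidPr/subsetP => y; rewrite !inE => Hxy; apply: leFtrans Hxy.
  rewrite HU.
  have Hy : forall y, leF x y -> Mt y \subset Mt x by move=> y; apply: M_sub.
  case HxQ: (Mt x \subset Q).
    have fx : f x = o3 by rewrite /f (negbTE Hxp) HxQ.
    apply: pm_intro => [y|j].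
      rewrite inE => Hxy; rewrite fx /f (negbTE (Hsucc _ _ Hpx Hxp Hxy)).
      by rewrite (subset_trans (Hy _ Hxy) HxQ) /scott_le eqxx.
    rewrite fx /scott_le /= !orbF => /eqP <-.
    by exists x; rewrite ?inE ?leFrefl.
  have HxP : Mt x \subset P by move: (Hdich x Hpx Hxp); rewrite HxQ orbF.
  have fy : forall y, leF x y -> f y = if topF y then o2 else o1.
    move=> y Hxy; rewrite /f (negbTE (Hsucc _ _ Hpx Hxp Hxy)).
    by rewrite (negbTE (Mt_nonsubQ p (subset_trans (Hy _ Hxy) HxP))).
  case Hxt: (topF x).
    have fx : f x = o2 by rewrite fy ?leFrefl ?Hxt.
    apply: pm_intro => [y|j].
      by rewrite inE => /(topP _ Hxt) ->; rewrite /scott_le eqxx.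
    rewrite fx /scott_le /= !orbF => /eqP <-.
    by exists x; rewrite ?inE ?leFrefl.
  have fx : f x = o1 by rewrite fy ?leFrefl ?Hxt.
  apply: pm_intro => [y|j].
    rewrite inE => Hxy; rewrite fx fy //; case: ifP => _; rewrite /scott_le //=.
  rewrite fx /scott_le /= orbF => /orP[/eqP<-|/eqP Ej].
    by exists x; rewrite ?inE ?leFrefl.
  have [q Hq] := exists_top x.
  exists q; first by rewrite inE (inM_le Hq).
  by rewrite fy ?(inM_le Hq) ?(inM_top Hq) //; apply: val_inj.
- by rewrite Hall fp; apply/setP => j; rewrite !inE /scott_le orbT.
Qed.

Hypothesis Hfork : validates_chi leF fork3_le.
Hypothesis Hscott : validates_chi leF scott_le.

Definition Et p (t : F * F * F) := [&& validT t, leF p t.1.1 & t.1.1 != p].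
Definition gF p (q q' : F) : bool :=
  [exists t : F * F * F, [&& Et p t, t.1.2 == q & t.2 == q']].
Definition nxt (x y : F * F * F) : bool := x.2 == y.1.2.

Lemma conn_succ p c x y : leF p c -> c != p -> x \in Mt c -> y \in Mt c ->
  connect (gF p) x y.
Proof.
move=> Hpc Hcp Hx Hy; case: (eqVneq x y) => [->|Hxy]; first exact: connect0.
apply: connect1; apply/existsP; exists (c, x, y).
rewrite /Et /validT /= Hx Hy Hpc Hcp !eqxx /= !andbT.
apply/implyP => Hlow; have [a [b [Ha Hb Hab]]] := fork_two Hfork Hlow.
apply/subsetP => z Hz; apply: (two_elems Hxy); exact: (subsetP Hab).
Qed.

Lemma conn_all p q0 q : ~~ lowF p -> q0 \in Mt p -> q \in Mt p ->
  connect (gF p) q0 q.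
Proof.
move=> Hnl Hq0 Hq; apply: contraT => Hnc; exfalso.
set P := [set x in Mt p | connect (gF p) q0 x].
have HPp : P \subset Mt p by apply/subsetP => x; rewrite inE => /andP[].
have Hdich : forall c, leF p c -> c != p ->
    (Mt c \subset P) || (Mt c \subset Mt p :\: P).
  move=> c Hpc Hcp; have [a Ha] := exists_top c.
  have HzM : forall z, z \in Mt c -> z \in Mt p by move=> z; apply: (subsetP (M_sub Hpc)).
  case Hca: (connect (gF p) q0 a).
    apply/orP; left; apply/subsetP => z Hz; rewrite inE HzM //=.
    exact: connect_trans Hca (conn_succ Hpc Hcp Ha Hz).
  apply/orP; right; apply/subsetP => z Hz; rewrite in_setD HzM // andbT inE HzM //=.
  apply/negP => Hz0; move: Hca; by rewrite (connect_trans Hz0 (conn_succ Hpc Hcp Hz Ha)).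
have [w Hw] : exists w, [&& leF p w, w != p & ~~ topF w].
  move: Hnl; rewrite /lowF negb_forall => /existsP [w].
  rewrite negb_imply => /andP[/andP[H1 H2] H3].
  by exists w; rewrite H1 H2 H3.
case/and3P: Hw => Hpw Hwp Hwt.
have HqQ : q \in Mt p :\: P by rewrite in_setD Hq andbT inE Hq (negbTE Hnc).
have Hq0P : q0 \in P by rewrite inE Hq0 connect0.
case/orP: (Hdich w Hpw Hwp) => HwS.
  exact: (scott_contra Hscott Hpw Hwp Hwt HwS HPp (ex_intro _ q HqQ) Hdich).
have EQ : Mt p :\: (Mt p :\: P) = P.
  apply/setP => x; rewrite !in_setD negb_and negbK; case Hx: (x \in P).
    by rewrite (subsetP HPp x Hx).
  by rewrite /= andNb.
apply: (scott_contra Hscott Hpw Hwp Hwt HwS (subsetDl _ _)).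
  by exists q0; rewrite EQ.
by move=> c Hpc Hcp; rewrite EQ orbC; apply: Hdich.
Qed.

Lemma path_nxt_start (x x' : F * F * F) W : x.2 = x'.2 -> path nxt x W = path nxt x' W.
Proof. by case: W => //= y W E; rewrite /nxt E. Qed.

Lemma last_nxt (x x' : F * F * F) W : x.2 = x'.2 -> (last x W).2 = (last x' W).2.
Proof. by case: W. Qed.

Lemma walk_of_conn p q q' : connect (gF p) q q' ->
  exists W, [/\ all (Et p) W, path nxt (q,q,q) W & (last (q,q,q) W).2 = q'].
Proof.
move/connectP => [l Hl ->]; elim: l q Hl => [|q1 l IH] q /=; first by exists [::].
case/andP => /existsP [t /and3P [Ht /eqP Ha /eqP Hb]] Hl.
have [W [HW1 HW2 HW3]] := IH q1 Hl.
exists (t :: W); split => /=.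
- by rewrite Ht.
- by rewrite /nxt /= Ha eqxx /= (@path_nxt_start _ (q1,q1,q1)) // Hb.
- by rewrite (@last_nxt _ (q1,q1,q1)) // Hb.
Qed.

Lemma walk_cover p (l : seq F) q R : ~~ lowF p -> q \in Mt p -> R \in Mt p ->
  (forall c, c \in l -> leF p c && (c != p)) ->
  exists W, [/\ all (Et p) W, path nxt (q,q,q) W, (last (q,q,q) W).2 = R &
     {subset l <= map (fun t => t.1.1) W}].
Proof.
move=> Hnl; elim: l q => [|c l IH] q Hq HR Hl.
  have [W [H1 H2 H3]] := walk_of_conn (conn_all Hnl Hq HR); by exists W; split.
have /andP [Hpc Hcp] := Hl c (mem_head _ _).
have [a [b [Ha Hb Hab]]] : exists a b, [/\ a \in Mt c, b \in Mt c & validT (c,a,b)].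
  case Hlow: (lowF c).
    have [a [b [Ha Hb Hab]]] := fork_two Hfork Hlow.
    by exists a, b; rewrite /validT /= Ha Hb Hab implybT.
  have [a Ha] := exists_top c; by exists a, a; rewrite /validT /= Ha Hlow.
have HbP : b \in Mt p := subsetP (M_sub Hpc) b Hb.
have [W1 [H11 H12 H13]] := walk_of_conn (conn_all Hnl Hq (subsetP (M_sub Hpc) a Ha)).
have [W2 [H21 H22 H23 H24]] : exists W, [/\ all (Et p) W, path nxt (b,b,b) W,
     (last (b,b,b) W).2 = R & {subset l <= map (fun t => t.1.1) W}].
  by apply: IH => // x Hx; apply: Hl; rewrite inE Hx orbT.
exists (W1 ++ (c,a,b) :: W2); split.
- by rewrite all_cat H11 /= /Et Hab Hpc Hcp H21.
- rewrite cat_path H12 /= /nxt H13 eqxx /=.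
  by rewrite (@path_nxt_start _ (b,b,b)).
- by rewrite last_cat /= (@last_nxt _ (b,b,b)).
- move=> x; rewrite inE => /orP [/eqP ->|Hx].
    by rewrite map_cat mem_cat inE eqxx orbT.
  by rewrite map_cat mem_cat /= inE H24 ?orbT.
Qed.

Definition stepOK p a b (W : seq (F * F * F)) : Prop :=
  [/\ W = (a,a,a) :: behead W, last (a,a,a) W = (b,b,b), sorted nxt W,
      all (Et p) W &
      forall c, leF p c -> c != p -> c \in map (fun t => t.1.1) W].

Lemma Et_top p q : ~~ lowF p -> q \in Mt p -> Et p (q,q,q).
Proof.
move=> Hnl Hq; have Hqt := inM_top Hq.
rewrite /Et /validT /= (top_M Hqt) set11 subsetUr implybT (inM_le Hq) /=.
by apply/eqP => E; move: Hnl; rewrite -E top_low.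
Qed.

Lemma walk_exists p a b : ~~ lowF p -> a \in Mt p -> b \in Mt p ->
  exists W, stepOK p a b W.
Proof.
move=> Hnl Ha Hb.
have Hl : forall c, c \in enum [set c | leF p c && (c != p)] -> leF p c && (c != p).
  by move=> c; rewrite mem_enum inE.
have [Wm [H1 H2 H3 H4]] := walk_cover Hnl Ha Hb Hl.
exists ((a,a,a) :: rcons Wm (b,b,b)); split => //.
- by rewrite /= last_rcons.
- by rewrite /= rcons_path H2 /nxt H3 eqxx.
- by rewrite /= all_rcons H1 !Et_top.
- move=> c Hpc Hcp; rewrite /= map_rcons inE mem_rcons inE H4 ?orbT //.
  by rewrite mem_enum inE Hpc Hcp.
Qed.

End FSide.

Lemma sorted_cat2 (T : Type) (e : rel T) (x0 : T) (b c : seq T) :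
  sorted e b -> sorted e c ->
  (~~ nilp b -> ~~ nilp c -> e (last x0 b) (head x0 c)) -> sorted e (b ++ c).
Proof.
case: b => [|x b'] //= Hb Hc He; rewrite cat_path Hb /=.
case: c Hc He => [|y c'] //= Hc He; rewrite Hc andbT; exact: He.
Qed.

Lemma last_indep (T : Type) (x y : T) (l : seq T) : ~~ nilp l -> last x l = last y l.
Proof. by case: l. Qed.

Lemma head_indep (T : Type) (x y : T) (l : seq T) : ~~ nilp l -> head x l = head y l.
Proof. by case: l. Qed.

Lemma head_flatten (T : Type) (x0 : T) (bs : seq (seq T)) :
  all (fun b => ~~ nilp b) bs -> head x0 (flatten bs) = head x0 (head [::] bs).
Proof. by case: bs => //= b bs' /andP[Hb _]; case: b Hb. Qed.

Lemma flatten_ne (T : Type) (bs : seq (seq T)) :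
  all (fun b => ~~ nilp b) bs -> ~~ nilp bs -> ~~ nilp (flatten bs).
Proof. by case: bs => //= b bs' /andP[Hb _]; case: b Hb. Qed.

Lemma all_last (T : Type) (P : pred T) (x : T) (l : seq T) :
  all P (x :: l) -> P (last x l).
Proof. by elim: l x => [|y l IH] x /=; [rewrite andbT|case/andP=> _; apply: IH]. Qed.

Lemma last_flatten (T : Type) (x0 : T) (bs : seq (seq T)) :
  all (fun b => ~~ nilp b) bs -> last x0 (flatten bs) = last x0 (last [::] bs).
Proof.
elim: bs x0 => //= b bs IH x0 /andP[Hb Hbs].
rewrite last_cat; case: bs IH Hbs => [|b2 bs'] IH Hbs /=; first by [].
rewrite IH //=; apply: last_indep.
exact: (all_last Hbs).
Qed.

Lemma sorted_flatten (T : Type) (e : rel T) (x0 : T) (bs : seq (seq T)) :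
  all (fun b => ~~ nilp b) bs -> all (sorted e) bs ->
  sorted (fun b1 b2 => e (last x0 b1) (head x0 b2)) bs -> sorted e (flatten bs).
Proof.
elim: bs => //= b bs IH /andP[Hb Hbs] /andP[Sb Sbs] Hs.
apply: (sorted_cat2 (x0:=x0)) => //.
  apply: IH => //; exact: path_sorted Hs.
case: bs Hbs Sbs Hs {IH} => [|b2 bs'] //= /andP[Hb2 _] _ /andP[He _] _ _.
by case: b2 Hb2 He.
Qed.

Lemma size_flatten_ge (T : Type) (bs : seq (seq T)) :
  all (fun b => ~~ nilp b) bs -> size bs <= size (flatten bs).
Proof.
elim: bs => //= b bs IH /andP[Hb Hbs]; rewrite size_cat.
by case: b Hb => //= x b _; rewrite addSn ltnS (leq_trans (IH Hbs)) // leq_addl.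
Qed.

Fixpoint lexlt (u v : seq nat) : bool :=
  match u, v with
  | _, [::] => false
  | [::], _ :: _ => true
  | i :: u', j :: v' => (i < j) || ((i == j) && lexlt u' v')
  end.
Definition lexle u v := (u == v) || lexlt u v.

Lemma lexlt_trans : transitive lexlt.
Proof.
move=> v u w; elim: u v w => [|i u IH] [|j v] [|k w] //=.
case/orP=> [Hij|/andP[/eqP <- Huv]] /orP [Hjk|/andP[/eqP <- Hvw]].
- by rewrite (ltn_trans Hij Hjk).
- by rewrite Hij.
- by rewrite Hjk.
- by rewrite eqxx (IH _ _ Huv Hvw) orbT.
Qed.

Lemma lexlt_irr u : lexlt u u = false.
Proof. by elim: u => //= i u ->; rewrite ltnn andbF. Qed.

Lemma lexle_refl : reflexive lexle.
Proof. by move=> u; rewrite /lexle eqxx. Qed.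

Lemma lexle_trans : transitive lexle.
Proof.
move=> v u w; rewrite /lexle => /orP[/eqP->//|Huv] /orP[/eqP<-|Hvw].
  by rewrite Huv orbT.
by rewrite (lexlt_trans Huv Hvw) orbT.
Qed.

Lemma lexle_cons i j u v :
  lexle (i :: u) (j :: v) = (i < j) || ((i == j) && lexle u v).
Proof.
rewrite /lexle /= eqseq_cons; case: (ltngtP i j) => //= _.
Qed.

Lemma lexle_nil u : lexle u [::] = (u == [::]).
Proof. by case: u. Qed.

Lemma lex_interval (x a b c : seq nat) :
  prefix x a -> prefix x c -> lexle a b -> lexle b c -> prefix x b.
Proof.
elim: x a b c => [|i x IH] a b c; first by rewrite !prefix0s.
case: a => [|i1 a] //; case: c => [|i3 c] //; rewrite !prefix_cons.
case/andP=> /eqP <- Ha /andP[/eqP <- Hc].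
case: b => [|j b]; first by rewrite lexle_nil.
rewrite !lexle_cons prefix_cons.
case: (ltngtP i j) => //= Hij; subst j; rewrite ?eqxx ?ltnn /= => Hab Hbc.
exact: IH Ha Hc Hab Hbc.
Qed.

Section Tree.
Variable F : finType.
Notation S := (F * F * F)%type.
Variable step : S -> seq S.
Hypothesis step_ne : forall st, ~~ nilp (step st).
Hypothesis step_chain : forall st,
  [/\ sorted (@nxt F) (step st), (head st (step st)).1.2 = st.1.2 &
      (last st (step st)).2 = st.2].

Definition child st j := nth st (step st) j.
Fixpoint run st (u : seq nat) : S := if u is j :: u' then run (child st j) u' else st.
Fixpoint addrOK st (u : seq nat) : bool :=
  if u is j :: u' then (j < size (step st)) && addrOK (child st j) u' else true.
Fixpoint leafs (m : nat) (st : S) : seq (seq nat) :=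
  if m is m'.+1 then
    flatten [seq map (cons j) (leafs m' (child st j)) | j <- iota 0 (size (step st))]
  else [:: [::]].

Lemma run_cat st u v : run st (u ++ v) = run (run st u) v.
Proof. by elim: u st => //= j u IH st. Qed.

Lemma addrOK_cat st u v : addrOK st (u ++ v) = addrOK st u && addrOK (run st u) v.
Proof. by elim: u st => //= j u IH st; rewrite IH andbA. Qed.

Lemma addrOK_nseq st k : addrOK st (nseq k 0).
Proof.
elim: k st => //= k IH st; rewrite IH andbT.
by have := step_ne st; case: (step st).
Qed.

Lemma mem_leafs m st u : (u \in leafs m st) = (size u == m) && addrOK st u.
Proof.
elim: m st u => [|m IH] st u /=.
  by rewrite inE; case: u.
case: u => [|j u] /=.
  apply/flatten_mapP => [[j _ /mapP [v _]]] //.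
apply/flatten_mapP/idP => [[i Hi /mapP [v Hv [-> ->]]]|].
  rewrite mem_iota /= add0n in Hi; move: Hv; rewrite IH eqSS Hi.
  by case/andP => -> ->.
rewrite eqSS => /andP[Hs /andP[Hj Hok]].
exists j; first by rewrite mem_iota.
by apply/mapP; exists u; rewrite // IH Hs.
Qed.

Lemma leafs_ne m st : ~~ nilp (leafs m st).
Proof.
apply/negP; rewrite /nilp size_eq0 => /eqP E.
have : nseq m 0 \in leafs m st by rewrite mem_leafs size_nseq eqxx addrOK_nseq.
by rewrite E.
Qed.

Lemma blocks_ne m st :
  all (fun b => ~~ nilp b)
    [seq map (cons j) (leafs m (child st j)) | j <- iota 0 (size (step st))].
Proof.
apply/allP => b /mapP [j _ ->].
by have := leafs_ne m (child st j); case: (leafs m _).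
Qed.

Lemma sorted_leafs m st : sorted lexlt (leafs m st).
Proof.
elim: m st => //= m IH st.
apply: (sorted_flatten (x0:=[::])); first exact: blocks_ne.
  apply/allP => b /mapP [j _ ->].
  rewrite sorted_map; apply: sub_sorted (IH (child st j)) => u v /=.
  by rewrite ltnn eqxx.
rewrite sorted_map; apply/(sortedP 0) => i; rewrite size_iota => Hi.
rewrite !nth_iota ?(ltn_trans (ltnSn i)) //= add0n.
have := leafs_ne m (child st i); have := leafs_ne m (child st i.+1).
case: (leafs m (child st i.+1)) => // v l _.
case: (leafs m (child st i)) => // w l' _ /=.
by rewrite (last_map (cons i)) /= add0n ltnSn.
Qed.

Lemma uniq_leafs m st : uniq (leafs m st).
Proof. apply: (sorted_uniq lexlt_trans lexlt_irr); exact: sorted_leafs. Qed.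

Definition sawL st u := (run st u).1.2.
Definition sawR st u := (run st u).2.

Lemma chain_leafs m st :
  [/\ sorted (fun u v => sawR st u == sawL st v) (leafs m st),
      sawL st (head [::] (leafs m st)) = st.1.2 &
      sawR st (last [::] (leafs m st)) = st.2].
Proof.
elim: m st => [|m IH] st; first by [].
have [Hs Hh Hl] := step_chain st.
have Hk : 0 < size (step st) by move: (step_ne st); rewrite /nilp lt0n.
split.
- rewrite /=; apply: (sorted_flatten (x0:=[::])); first exact: blocks_ne.
    apply/allP => b /mapP [j _ ->]; rewrite sorted_map.
    by have [H _ _] := IH (child st j); exact: H.
  rewrite sorted_map; apply/(sortedP 0) => i; rewrite size_iota => Hi.
  rewrite !nth_iota ?(ltn_trans (ltnSn i)) //= add0n.
  have [_ H1 _] := IH (child st i.+1); have [_ _ H2] := IH (child st i).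
  have := leafs_ne m (child st i); have := leafs_ne m (child st i.+1).
  move: H1 H2.
  case: (leafs m (child st i.+1)) => // v l H1 H2 _.
  case E: (leafs m (child st i)) => [|w l'] // _ /=.
  rewrite (last_map (cons i)) /sawR /sawL /= add0n.
  rewrite E /= /sawR in H2; rewrite H2; rewrite /sawL /= in H1; rewrite H1.
  by move/(sortedP st): Hs => /(_ i Hi).
- rewrite /= head_flatten ?blocks_ne //.
  case E: (size (step st)) Hk => [|k] // _ /=.
  have := leafs_ne m (child st 0); have [_ H1 _] := IH (child st 0).
  case: (leafs m (child st 0)) H1 => //= v l H1 _.
  by rewrite /sawL /= -/(sawL _ _) H1 /child nth0.
- rewrite /= last_flatten ?blocks_ne //.
  have [k Ek] : exists k, size (step st) = k.+1 by case: (size (step st)) Hk; eauto.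
  rewrite Ek -addn1 iotaD map_cat last_cat /= add0n.
  have := leafs_ne m (child st k); have [_ _ H2] := IH (child st k).
  case E: (leafs m (child st k)) H2 => [|v l] //= H2 _.
  rewrite (last_map (cons k)) /sawR /=.
  rewrite /sawR in H2; rewrite H2 /child -Hl -nth_last Ek.
  by [].
Qed.

Lemma head_leafs m st : head [::] (leafs m.+1 st) = 0 :: head [::] (leafs m (child st 0)).
Proof.
have Hk : 0 < size (step st) by move: (step_ne st); rewrite /nilp lt0n.
rewrite /= head_flatten ?blocks_ne //.
case E: (size (step st)) Hk => [|k] // _ /=.
by have := leafs_ne m (child st 0); case: (leafs m (child st 0)).
Qed.

Lemma last_leafs m st : last [::] (leafs m.+1 st) =
  (size (step st)).-1 :: last [::] (leafs m (child st (size (step st)).-1)).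
Proof.
have Hk : 0 < size (step st) by move: (step_ne st); rewrite /nilp lt0n.
rewrite /= last_flatten ?blocks_ne //.
have [k Ek] : exists k, size (step st) = k.+1 by case: (size (step st)) Hk; eauto.
rewrite Ek -addn1 iotaD map_cat last_cat /= add0n.
have := leafs_ne m (child st k).
rewrite addn1 /=; case: (leafs m (child st k)) => [|v l] //= _; by rewrite (last_map (cons k)).
Qed.

Lemma size_leafs_ge m st : size (step st) <= size (leafs m.+1 st).
Proof.
rewrite /=; apply: leq_trans (size_flatten_ge (blocks_ne m st)).
by rewrite size_map size_iota.
Qed.

Lemma prefix_anti (a b : seq nat) : prefix a b -> prefix b a -> a = b.
Proof.
move=> Hab Hba; have Hs := size_prefix Hab; have Hs' := size_prefix Hba.
move: Hab; rewrite prefixE => /eqP <-.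
by rewrite take_oversize.
Qed.

Lemma prefix_size_eq (a b : seq nat) : prefix a b -> size b <= size a -> a = b.
Proof.
move=> Hab Hs; move: (Hab); rewrite prefixE => /eqP E.
by rewrite -E take_oversize.
Qed.

Lemma prefix_total (a b x : seq nat) : prefix a x -> prefix b x -> prefix a b || prefix b a.
Proof.
rewrite !prefixE => /eqP Ea /eqP Eb.
case: (leqP (size a) (size b)) => H.
  by apply/orP; left; apply/eqP; rewrite -{1}Eb -take_min (minn_idPl H) Ea.
apply/orP; right; apply/eqP; rewrite -{1}Ea -take_min (minn_idPl (ltnW H)) Eb //.
Qed.

Variable h : nat.
Variable root : S.

Definition nodes := flatten [seq leafs m root | m <- iota 0 h.+1].

Lemma mem_nodes u : (u \in nodes) = (size u <= h) && addrOK root u.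
Proof.
apply/flatten_mapP/idP => [[m Hm]|/andP[Hs Ho]].
  by rewrite mem_iota add0n /= ltnS in Hm; rewrite mem_leafs => /andP[/eqP -> ->]; rewrite Hm.
exists (size u); first by rewrite mem_iota add0n /= ltnS.
by rewrite mem_leafs eqxx.
Qed.

Lemma node_take u j : u \in nodes -> take j u \in nodes.
Proof.
rewrite !mem_nodes => /andP[Hs Ho]; rewrite size_take.
rewrite (leq_trans _ Hs) ?geq_minr //=.
by move: Ho; rewrite -{1}(cat_take_drop j u) addrOK_cat => /andP[].
Qed.

Lemma nil_node : [::] \in nodes.
Proof. by rewrite mem_nodes. Qed.

Definition TT := seq_sub nodes.
Definition rT : TT := SeqSub nil_node.
Definition leT : rel TT := fun x y => prefix (val x) (val y).

Lemma val_node (x : TT) : val x \in nodes.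
Proof. exact: ssvalP. Qed.

Lemma vinsub u : u \in nodes -> val (insubd rT u : TT) = u.
Proof. exact: insubdK. Qed.

Lemma leT_porder : is_porder leT.
Proof.
split; first by move=> x; exact: prefix_refl.
split; last by move=> y x z; exact: prefix_trans.
by move=> x y /andP[H1 H2]; apply: val_inj; exact: prefix_anti.
Qed.

Lemma leT_tree : is_tree leT rT.
Proof.
split; first by split; [exact: leT_porder|move=> x; exact: prefix0s].
move=> x y z; rewrite !inE => Hy Hz; exact: prefix_total Hy Hz.
Qed.

Lemma card_down (x : TT) : #|down leT x| = (size (val x)).+1.
Proof.
pose g (j : 'I_(size (val x)).+1) : TT := insubd rT (take j (val x)).
have Hg : forall j : 'I_(size (val x)).+1, val (g j) = take j (val x).
  by move=> j; rewrite vinsub // node_take // val_node.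
have -> : down leT x = g @: setT.
  apply/setP => y; rewrite inE; apply/idP/imsetP => [Hy|[j _ ->]].
    have Hs := size_prefix Hy.
    exists (inord (size (val y))); first by rewrite inE.
    apply: val_inj; rewrite Hg inordK ?ltnS //.
    by move: Hy; rewrite /leT prefixE => /eqP.
  by rewrite /leT Hg prefix_take.
rewrite card_imset ?cardsT ?card_ord // => i j Eij.
apply: val_inj; have := congr1 (fun t : TT => size (val t)) Eij.
have Hi : i <= size (val x) by rewrite -ltnS.
have Hj : j <= size (val x) by rewrite -ltnS.
by rewrite /= !Hg !size_take_min (minn_idPl Hi) (minn_idPl Hj).
Qed.

Lemma top_size (x : TT) : is_top leT x = (size (val x) == h).
Proof.
have Hx := val_node x; rewrite mem_nodes in Hx; case/andP: Hx => Hs Ho.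
apply/forallP/eqP => [H|Hh y].
  apply/eqP; apply: contraT => Hne.
  have Hlt : size (val x) < h by rewrite ltn_neqAle Hne Hs.
  have Hn : val x ++ [:: 0] \in nodes.
    rewrite mem_nodes size_cat addn1 Hlt addrOK_cat Ho /=.
    exact: (addrOK_nseq _ 1).
  have := H (insubd rT (val x ++ [:: 0])); rewrite /leT vinsub // prefix_prefix /=.
  move/eqP/(congr1 (fun t : TT => size (val t))); rewrite vinsub //= size_cat addn1.
  by move/eqP; rewrite eqn_leq ltnn.
apply/implyP => Hxy; apply/eqP/val_inj; apply/esym/prefix_size_eq => //.
have := val_node y; rewrite mem_nodes => /andP[H _]; by rewrite Hh.
Qed.

Lemma T_height : 0 < size (leafs h root) -> has_height leT h.
Proof.
move=> Hl; split.
  pose u := nth [::] (leafs h root) 0.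
  have Hu : u \in leafs h root by rewrite mem_nth.
  have Hun : u \in nodes by move: Hu; rewrite mem_leafs mem_nodes => /andP[/eqP -> ->]; rewrite leqnn.
  exists (down leT (insubd rT u)); split; first exact: (proj2 leT_tree).
  by rewrite card_down vinsub //; move: Hu; rewrite mem_leafs => /andP[/eqP ->].
move=> C HC.
pose g (y : TT) : 'I_h.+1 := inord (size (val y)).
rewrite -(card_in_imset (f:=g)); first by rewrite (leq_trans (max_card _)) // card_ord.
move=> a b Ha Hb Eab; apply: val_inj.
have Hsa : size (val a) <= h by have := val_node a; rewrite mem_nodes => /andP[].
have Hsb : size (val b) <= h by have := val_node b; rewrite mem_nodes => /andP[].
have Es : size (val a) = size (val b).
  by move: (congr1 val Eab); rewrite /g /= !inordK ?ltnS.
case/orP: (HC a b Ha Hb) => H; [|apply/esym]; apply: prefix_size_eq => //; by rewrite Es.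
Qed.

Definition lv := leafs h root.
Definition sL : seq TT := map (insubd rT) lv.

Lemma lv_node u : u \in lv -> u \in nodes.
Proof. by rewrite mem_leafs mem_nodes => /andP[/eqP -> ->]; rewrite leqnn. Qed.

Lemma val_sL : map val sL = lv.
Proof.
rewrite /sL -map_comp; rewrite -[RHS]map_id; apply/eq_in_map => u Hu /=.
exact: vinsub (lv_node Hu).
Qed.

Lemma size_sL : size sL = size lv.
Proof. by rewrite size_map. Qed.

Lemma nth_sL d i : i < size lv -> val (nth d sL i) = nth [::] lv i.
Proof.
move=> Hi; rewrite (set_nth_default rT) ?size_sL // (nth_map [::]) //.
by rewrite vinsub // lv_node // mem_nth.
Qed.

Lemma mem_sL (x : TT) : (x \in sL) = (val x \in lv).
Proof.
apply/idP/idP => [Hx|Hx]; first by rewrite -val_sL map_f.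
by rewrite -(valKd rT x); apply: map_f.
Qed.

Lemma sL_plane : plane_enum leT sL.
Proof.
split; first by rewrite -(map_inj_uniq val_inj) val_sL uniq_leafs.
split.
  move=> x; rewrite mem_sL top_size mem_leafs.
  by have := val_node x; rewrite mem_nodes => /andP[_ ->]; rewrite andbT.
move=> x i j l Hij Hjl Hl Hi Hlx d.
rewrite size_sL in Hl.
have Hjs : j < size lv by apply: leq_ltn_trans Hl.
have His : i < size lv by apply: leq_ltn_trans Hjs.
have := Hi rT; have := Hlx rT; rewrite /leT !nth_sL // => H2 H1.
have Hs : sorted lexle lv.
  by apply: sub_sorted (sorted_leafs h root) => u v Huv; rewrite /lexle Huv orbT.
have Hm := sorted_leq_nth lexle_trans lexle_refl [::] Hs.
apply: (lex_interval H1 H2); apply: Hm => //; rewrite inE //.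
Qed.

Lemma sawed_height (K2 : 1 < size lv) : has_height (sawed_le leT rT sL) h.+1.
Proof.
have Hl0 : 0 < size lv by apply: ltn_trans K2.
have [Hch Hbd] := T_height Hl0.
split.
  have HK : 0 < (size sL).-1 by rewrite size_sL -subn1 subn_gt0.
  pose i0 : 'I_(size sL).-1 := Ordinal HK.
  pose t0 := nth rT sL 0.
  have Ht0 : size (val t0) = h.
    rewrite /t0 nth_sL //; have := mem_nth [::] Hl0; rewrite mem_leafs.
    by case/andP => /eqP.
  exists (inr i0 |: (inl @: down leT t0)); split.
    move=> a b; rewrite !inE => /orP[/eqP->|/imsetP[a' Ha' ->]] /orP[/eqP->|/imsetP[b' Hb' ->]].
    - by rewrite /sawed_le /=.
    - by rewrite /sawed_le /=; move: Hb'; rewrite inE => ->.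
    - by rewrite /sawed_le /=; move: Ha'; rewrite inE => ->.
    - rewrite /sawed_le /=; exact: (proj2 leT_tree t0 a' b' Ha' Hb').
  rewrite cardsU1 card_imset; last exact: inl_inj.
  rewrite card_down Ht0; case: imsetP => //= [[y _ //]].
move=> C HC.
pose CL := [set x | inl x \in C]; pose CR := [set i | inr i \in C].
have HCL : #|CL| <= h.+1.
  apply: Hbd => x y; rewrite !inE => Hx Hy; exact: (HC _ _ Hx Hy).
have HCR : #|CR| <= 1.
  apply/card_le1_eqP => i j; rewrite !inE => Hi Hj.
  by case/orP: (HC _ _ Hi Hj); rewrite /sawed_le /= => /eqP.
have HCsub : C \subset inl @: CL :|: inr @: CR.
  apply/subsetP => [[x|i]] Hx; rewrite inE.
    by apply/orP; left; apply/imsetP; exists x; rewrite ?inE.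
  by apply/orP; right; apply/imsetP; exists i; rewrite ?inE.
apply: (leq_trans (subset_leq_card HCsub)).
apply: (leq_trans (leq_card_setU _ _)).
rewrite -addn1; apply: leq_add.
  exact: leq_trans (leq_imset_card _ _) HCL.
exact: leq_trans (leq_imset_card _ _) HCR.
Qed.

End Tree.

Section Main.
Variables (F : finType) (leF : rel F) (rF : F) (n : nat).
Hypothesis hn : 2 <= n.
Hypothesis Hrefl : reflexive leF.
Hypothesis Hanti : antisymmetric leF.
Hypothesis Htrans : transitive leF.
Hypothesis Hroot : forall x, leF rF x.
Hypothesis Hhgt : has_height leF n.
Hypothesis Hfork : validates_chi leF fork3_le.
Hypothesis Hscott : validates_chi leF scott_le.

Notation S := (F * F * F)%type.
Notation topF := (is_top leF).
Notation MF := (Mt leF).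
Notation lowf := (lowF leF).
Notation validf := (validT leF).

Definition q0 : F := xchoose (exists_top Hrefl Hanti Htrans rF).
Lemma q0_M : q0 \in MF rF.
Proof. exact: xchooseP. Qed.

Definition root0 : S := (rF, q0, q0).

Definition Wc (st : S) : seq S :=
  epsilon (inhabits [::]) (fun W => stepOK leF st.1.1 st.1.2 st.2 W).

Definition stepF (st : S) : seq S :=
  if ~~ lowf st.1.1 && validf st then Wc st else [:: st].

Lemma stepF_spec st : ~~ lowf st.1.1 -> validf st ->
  stepOK leF st.1.1 st.1.2 st.2 (stepF st).
Proof.
move=> H1 H2; rewrite /stepF H1 H2 /=; apply: epsilon_spec.
case/and3P: H2 => Ha Hb _.
exact: (walk_exists Hrefl Hanti Htrans Hfork Hscott H1 Ha Hb).
Qed.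

Lemma stepF_low st : lowf st.1.1 -> stepF st = [:: st].
Proof. by rewrite /stepF => ->. Qed.

Lemma stepF_ne st : ~~ nilp (stepF st).
Proof.
case H: (~~ lowf st.1.1 && validf st); last by rewrite /stepF H.
case/andP: H => H1 H2; have [E _ _ _ _] := stepF_spec H1 H2.
by rewrite E.
Qed.

Lemma stepF_chain st : [/\ sorted (@nxt F) (stepF st),
  (head st (stepF st)).1.2 = st.1.2 & (last st (stepF st)).2 = st.2].
Proof.
case H: (~~ lowf st.1.1 && validf st); last by rewrite /stepF H.
case/andP: H => H1 H2; have [E L So _ _] := stepF_spec H1 H2.
split => //; first by rewrite E.
by move: L; rewrite E /= => ->.
Qed.

Notation childF := (child stepF).
Notation runF := (run stepF).
Notation okF := (addrOK stepF).
Notation leafsF := (leafs stepF).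
Definition h := n.-1.
Notation nodesF := (nodes stepF h root0).
Notation TT := (TT stepF h root0).
Notation leT := (leT (step:=stepF) (h:=h) (root:=root0)).
Notation rT := (rT stepF h root0).
Notation lvF := (lv stepF h root0).
Notation sLF := (sL stepF h root0).

Lemma run_low st u : lowf st.1.1 -> runF st u = st.
Proof.
move=> Hl; elim: u => //= j u IH; rewrite /child stepF_low //.
by case: j => [|j] /=; [exact IH | rewrite nth_nil; exact IH].
Qed.

Lemma child_props st j : validf st -> j < size (stepF st) ->
  validf (childF st j) && leF st.1.1 (childF st j).1.1.
Proof.
move=> Hv Hj; case Hl: (lowf st.1.1).
  rewrite /child stepF_low // in Hj *; case: j Hj => [|j] //= _; rewrite Hrefl andbT; exact Hv.
have [_ _ _ HE _] := stepF_spec (negbT Hl) Hv.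
have := allP HE _ (mem_nth st Hj); rewrite /child.
by case/and3P => -> -> _.
Qed.

Lemma run_props st u : validf st -> okF st u ->
  validf (runF st u) && leF st.1.1 (runF st u).1.1.
Proof.
elim: u st => [|j u IH] st /=; first by move=> ->; rewrite Hrefl.
move=> Hv /andP[Hj Ho]; case/andP: (child_props Hv Hj) => Hc Hle.
case/andP: (IH _ Hc Ho) => -> Hle' /=; exact: Htrans Hle Hle'.
Qed.

Lemma nonlow_chain3 p : ~~ lowf p ->
  exists C : {set F}, [/\ is_chain leF C, #|C| = 3 & forall y, y \in C -> leF p y].
Proof.
rewrite /lowF negb_forall => /existsP [w]; rewrite negb_imply => /andP[/andP[Hpw Hwp] Hwt].
move: Hwt; rewrite /is_top negb_forall => /existsP [z]; rewrite negb_imply => /andP[Hwz Hzw].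
have Hzp : z != p.
  apply/eqP => E; move: Hwp; rewrite -E in Hpw *.
  by rewrite (Hanti (introT andP (conj Hwz Hpw))) eqxx.
exists (p |: (w |: [set z])); split.
- have Hle : forall u, u \in p |: (w |: [set z]) -> leF p u.
    move=> u /setU1P[->|/setU1P[->|/set1P ->]]; rewrite ?Hrefl //; exact: Htrans Hwz.
  move=> x y Hx Hy.
  case/setU1P: (Hx) => [->|Hx']; first by rewrite Hle.
  case/setU1P: (Hy) => [->|Hy']; first by rewrite Hle ?orbT.
  by case/setU1P: Hx' => [->|/set1P ->]; case/setU1P: Hy' => [->|/set1P ->];
    rewrite ?Hrefl ?Hwz ?orbT.
- rewrite cardsU1 cardsU1 cards1 !inE negb_or.
  by rewrite eq_sym Hwp eq_sym Hzp eq_sym Hzw.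
- move=> y /setU1P[->|/setU1P[->|/set1P ->]]; rewrite ?Hrefl //; exact: Htrans Hwz.
Qed.

Lemma run_chain st u : validf st -> okF st u -> ~~ lowf (runF st u).1.1 ->
  exists C : {set F}, [/\ is_chain leF C, #|C| = size u + 3 &
                          forall y, y \in C -> leF st.1.1 y].
Proof.
elim: u st => [|j u IH] st Hv Ho Hnl; first exact: nonlow_chain3.
case/andP: Ho => Hj Ho.
have Hstl : ~~ lowf st.1.1.
  apply/negP => Hl; move: Hnl; by rewrite (run_low (j :: u) Hl) Hl.
case/andP: (child_props Hv Hj) => Hcv Hle.
have Hcp : (childF st j).1.1 != st.1.1.
  have [_ _ _ HE _] := stepF_spec Hstl Hv.
  by have := allP HE _ (mem_nth st Hj); case/and3P.
have [C [Hch HC Hge]] := IH _ Hcv Ho Hnl.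
exists (st.1.1 |: C); split.
- move=> x y; rewrite !inE => /orP[/eqP->|Hx] /orP[/eqP->|Hy]; rewrite ?Hrefl //.
  + by rewrite (Htrans Hle (Hge _ Hy)).
  + by rewrite (Htrans Hle (Hge _ Hx)) orbT.
  + exact: Hch.
- rewrite cardsU1 HC /=; suff -> : (st.1.1 \notin C) = true by rewrite addSn.
  apply/negP => Hin; move: Hcp; by rewrite (Hanti (introT andP (conj Hle (Hge _ Hin)))) eqxx.
- move=> y; rewrite !inE => /orP[/eqP->|Hy]; first exact: Hrefl.
  exact: Htrans Hle (Hge _ Hy).
Qed.

Lemma root_nonlow : ~~ lowf rF.
Proof.
apply/negP => Hl; have [[C [HC Hcard]] _] := Hhgt.
have H1 : #|C :\ rF| <= 1.
  apply/card_le1_eqP => x y; rewrite !inE => /andP[Hx HxC] /andP[Hy HyC].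
  have Hxt := low_succ_top Hl (Hroot x) Hx.
  have Hyt := low_succ_top Hl (Hroot y) Hy.
  move/topP: Hxt => Hxt; move/topP: Hyt => Hyt.
  case/orP: (HC x y HxC HyC) => H; first by rewrite (Hxt y H).
  by rewrite (Hyt x H).
have := cardsD1 rF C; rewrite Hcard => E.
have : n.+1 <= 2 by rewrite E; exact: (leq_add (leq_b1 _) H1).
by rewrite ltnS leqNgt hn.
Qed.

Lemma root_valid : validf root0.
Proof. by rewrite /validT /= q0_M (negbTE root_nonlow). Qed.

Lemma h_pos : 0 < h.
Proof. by rewrite /h -ltnS prednK // ltnW. Qed.

Lemma nonlow_size u : okF root0 u -> ~~ lowf (runF root0 u).1.1 -> size u < h.
Proof.
move=> Ho Hnl; have [C [HC Hcard _]] := run_chain root_valid Ho Hnl.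
have [_ Hb] := Hhgt; have := Hb C HC; rewrite Hcard /h.
case: n hn => [|[|m]] //= _; by rewrite !addnS addn0 !ltnS.
Qed.

Lemma root_step : stepOK leF rF q0 q0 (stepF root0).
Proof. exact (@stepF_spec root0 root_nonlow root_valid). Qed.

Lemma q0_low : lowf q0.
Proof. exact: top_low (inM_top q0_M). Qed.

Lemma child_first : childF root0 0 = (q0, q0, q0).
Proof. have [E _ _ _ _] := root_step; by rewrite /child E. Qed.

Lemma child_last : childF root0 (size (stepF root0)).-1 = (q0, q0, q0).
Proof.
have [E L _ _ _] := root_step; rewrite /child nth_last.
by move: L; rewrite E /= => ->.
Qed.

Lemma hS : h = h.-1.+1.
Proof. by rewrite prednK // h_pos. Qed.

Lemma first_leaf : runF root0 (head [::] lvF) = (q0, q0, q0).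
Proof.
rewrite /lv hS (head_leafs stepF_ne) /= child_first run_low //; exact: q0_low.
Qed.

Lemma last_leaf : runF root0 (last [::] lvF) = (q0, q0, q0).
Proof.
rewrite /lv hS (last_leafs stepF_ne) /= child_last run_low //; exact: q0_low.
Qed.

Lemma size_lv : 1 < size lvF.
Proof.
have [E _ _ _ Hcov] := root_step.
have [w Hw] : exists w, [&& leF rF w, w != rF & ~~ topF w].
  move: root_nonlow; rewrite /lowF negb_forall => /existsP [w].
  rewrite negb_imply => /andP[/andP[H1 H2] H3].
  by exists w; rewrite H1 H2 H3.
case/and3P: Hw => Hpw Hwp Hwt.
have := Hcov w Hpw Hwp; rewrite E /= inE => /orP[/eqP Ew|Hin].
  by move: Hwt; rewrite Ew (inM_top q0_M).
have H2 : 1 < size (stepF root0).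
  by rewrite E /=; move: Hin; case: (behead _).
apply: leq_trans H2 _; rewrite /lv hS; exact: size_leafs_ge stepF_ne _ _.
Qed.

Lemma compat i : i.+1 < size lvF ->
  sawR stepF root0 (nth [::] lvF i) = sawL stepF root0 (nth [::] lvF i.+1).
Proof.
move=> Hi; have [Hs _ _] := chain_leafs stepF_ne stepF_chain h root0.
by move/(sortedP [::]): Hs => /(_ i Hi) /eqP.
Qed.

Lemma node_ok (x : TT) : okF root0 (val x).
Proof. by have := val_node x; rewrite mem_nodes => /andP[]. Qed.

Lemma node_size (x : TT) : size (val x) <= h.
Proof. by have := val_node x; rewrite mem_nodes => /andP[]. Qed.

Lemma leaf_ge (x : TT) k : k < size lvF -> prefix (val x) (nth [::] lvF k) ->
  leF (runF root0 (val x)).1.1 (sawL stepF root0 (nth [::] lvF k)) &&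
  leF (runF root0 (val x)).1.1 (sawR stepF root0 (nth [::] lvF k)).
Proof.
move=> Hk /prefixP [w Ew].
have Hu : nth [::] lvF k \in lvF by rewrite mem_nth.
have Huo : okF root0 (nth [::] lvF k) by move: Hu; rewrite mem_leafs => /andP[].
rewrite /sawL /sawR Ew run_cat.
move: Huo; rewrite Ew addrOK_cat => /andP[Hxo Hwo].
have Hst := run_props root_valid Hxo; case/andP: Hst => Hst _.
case/andP: (run_props Hst Hwo) => HL Hle.
case/and3P: HL => Ha Hb _.
by rewrite (Htrans Hle (inM_le Ha)) (Htrans Hle (inM_le Hb)).
Qed.

Definition fmap (z : TT + 'I_(size sLF).-1) : F :=
  match z with
  | inl x => (runF root0 (val x)).1.1
  | inr i => sawR stepF root0 (nth [::] lvF i)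
  end.

Lemma saw_top (i : 'I_(size sLF).-1) : topF (fmap (inr i)).
Proof.
have Hi : i < size lvF by rewrite -size_sL (leq_trans (ltn_ord i)) // leq_pred.
have Hu : nth [::] lvF i \in lvF by rewrite mem_nth.
have Huo : okF root0 (nth [::] lvF i) by move: Hu; rewrite mem_leafs => /andP[].
case/andP: (run_props root_valid Huo) => /and3P [_ Hb _] _.
exact: inM_top Hb.
Qed.

Lemma ord_lt (i : 'I_(size sLF).-1) : i.+1 < size lvF.
Proof. by rewrite -size_sL -[X in _ < X]prednK ?ltnS // size_sL (ltn_trans _ size_lv). Qed.

Lemma fmap_pm : pmorphism (sawed_le leT rT sLF) leF fmap.
Proof.
move=> [x|i] _; rewrite setTI; last first.
  have Ht := saw_top i; move/topP: (Ht) => Ht'.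
  apply: pm_intro => [[y|j]|z Hz].
  - by rewrite inE /sawed_le.
  - by rewrite inE /sawed_le /= => /eqP <-; exact: Hrefl.
  - exists (inr i); first by rewrite inE /sawed_le /=.
    by rewrite (Ht' z Hz).
set st := runF root0 (val x).
have Hxo := node_ok x.
have Hst : validf st by case/andP: (run_props root_valid Hxo).
apply: pm_intro => [[y|i]|z Hz].
- rewrite inE /sawed_le /= /leT => /prefixP [w Ew].
  have Hyo := node_ok y; move: Hyo; rewrite Ew addrOK_cat => /andP[_ Hwo].
  rewrite Ew run_cat; by case/andP: (run_props Hst Hwo).
- rewrite inE /sawed_le /= /leT => /orP[H|H].
    rewrite nth_sL in H; last exact: ltn_trans (ord_lt i).
    by case/andP: (leaf_ge (ltn_trans (ltnSn _) (ord_lt i)) H).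
  rewrite nth_sL in H; last exact: ord_lt i.
  by rewrite /= compat ?ord_lt //; case/andP: (leaf_ge (ord_lt i) H).
case: (eqVneq z st.1.1) => [->|Hzp].
  by exists (inl x); rewrite // inE /sawed_le /= /leT prefix_refl.
case Hl: (lowf st.1.1); last first.
  have [_ _ _ _ Hcov] := stepF_spec (negbT Hl) Hst.
  have /mapP [t Ht Ezt] := Hcov z Hz Hzp.
  pose j := index t (stepF st).
  have Hj : j < size (stepF st) by rewrite index_mem.
  have Hs := nonlow_size Hxo (negbT Hl).
  have Hn : val x ++ [:: j] \in nodesF.
    rewrite mem_nodes size_cat addn1 Hs addrOK_cat Hxo /=.
    by rewrite Hj.
  exists (inl (insubd rT (val x ++ [:: j]))).
    by rewrite inE /sawed_le /= /leT vinsub // prefix_prefix.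
  rewrite /= vinsub // run_cat /= -/st /child nth_index //.
have Hzt : topF z by exact: (low_succ_top Hl Hz Hzp).
have HzM : z \in MF st.1.1 by rewrite inE Hzt Hz.
case/and3P: Hst => Ha Hb Hsub.
have Hz2 : z \in [set st.1.2; st.2] by rewrite (subsetP (implyP Hsub Hl)).
pose u := val x ++ nseq (h - size (val x)) 0.
have Hu : u \in lvF.
  rewrite /lv mem_leafs size_cat size_nseq subnKC ?node_size // eqxx /=.
  rewrite /u addrOK_cat; apply/andP; split; [exact Hxo | exact: (addrOK_nseq stepF_ne)].
have Hru : runF root0 u = st by rewrite /u run_cat run_low.
pose i := index u lvF.
have Hi : i < size lvF by rewrite index_mem.
have Hnth : nth [::] lvF i = u by rewrite nth_index.
have Hpre : prefix (val x) u by rewrite prefix_prefix.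
rewrite !inE in Hz2; case/orP: Hz2 => /eqP Ez.
- (* z = a : use the saw on the left *)
  case: (posnP i) => Hi0.
    move: Hzp; have : u = head [::] lvF.
      by rewrite -Hnth Hi0; case: (lvF) (size_lv) => [|? ?].
    by move/(congr1 (runF root0)); rewrite first_leaf Hru => Est; rewrite Ez Est /= eqxx.
  have Hi1 : i.-1 < (size sLF).-1.
    by rewrite size_sL -!subn1 ltn_sub2r // size_lv.
  exists (inr (Ordinal Hi1)).
    by rewrite inE /sawed_le /= /leT prednK // (nth_sL rT Hi) Hnth Hpre orbT.
  rewrite /= compat ?prednK // Hnth /sawL Hru Ez //.
- (* z = b : use the saw on the right *)
  case: (ltnP i.+1 (size lvF)) => Hi1.
    have Hi1' : i < (size sLF).-1 by rewrite size_sL -ltnS prednK // (ltn_trans _ Hi1).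
    exists (inr (Ordinal Hi1')).
      by rewrite inE /sawed_le /= /leT nth_sL // Hnth Hpre.
    by rewrite /= Hnth /sawR Hru Ez.
  move: Hzp; have : u = last [::] lvF.
    rewrite -Hnth -nth_last; congr nth.
    have E : size lvF = i.+1 by apply/eqP; rewrite eqn_leq Hi1 Hi.
    by rewrite E.
  by move/(congr1 (runF root0)); rewrite last_leaf Hru => Est; rewrite Ez Est /= eqxx.
Qed.

Lemma fmap_surj : fmap @: [set: _] = [set: F].
Proof.
apply/setP => z; rewrite inE; apply/imsetP.
have := @fmap_pm (inl rT) (in_setT _); rewrite setTI => E.
have : z \in up leF (fmap (inl rT)) by rewrite inE; exact: Hroot.
by rewrite -E => /imsetP [y _ ->]; exists y.
Qed.

Lemma main_constr :
  exists (T : finType) (leT : rel T) (rT : T) (s : seq T),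
    [/\ is_tree leT rT,
        (exists m, 0 < m /\ has_height leT m),
        (forall x y, is_top leT x -> is_top leT y ->
           elt_height leT x = elt_height leT y) /\
        plane_enum leT s,
        has_height (sawed_le leT rT s) n &
        (exists f : T + 'I_(size s).-1 -> F,
          pmorphism (sawed_le leT rT s) leF f /\ f @: [set: _] = [set: F])].
Proof.
exists TT, leT, rT, sLF; split.
- exact: leT_tree.
- exists h; split; first exact: h_pos.
  apply: T_height; exact: ltn_trans size_lv.
- split; last exact: (sL_plane stepF_ne).
  move=> x y; rewrite !(top_size stepF_ne) => /eqP Hx /eqP Hy.
  by rewrite /elt_height !card_down Hx Hy.
- have := sawed_height size_lv; rewrite /h prednK //; exact: ltnW.
- exists fmap; split; [exact: fmap_pm | exact: fmap_surj].
Qed.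

End Main.

Theorem lemma7p8 (n : nat) (hn : 2 <= n)
    (F : finType) (leF : rel F) (rF : F) :
  finite_rooted_poset leF rF -> has_height leF n -> validates_PL leF ->
  exists (T : finType) (leT : rel T) (rT : T) (s : seq T),
    [/\ is_tree leT rT,
        (exists m, 0 < m /\ has_height leT m),
        (forall x y, is_top leT x -> is_top leT y ->
           elt_height leT x = elt_height leT y) /\
        plane_enum leT s,
        has_height (sawed_le leT rT s) n &
        (exists f : T + 'I_(size s).-1 -> F,
          pmorphism (sawed_le leT rT s) leF f /\ f @: [set: _] = [set: F])].
Proof.
move=> [[Hrefl [Hanti Htrans]] Hroot] Hhgt [Hfork Hscott].
exact: (main_constr hn Hrefl Hanti Htrans Hroot Hhgt Hfork Hscott).
Qed.
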